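(* In the setting of the context, the fidelity between the original ciphertext and the anamorphic ciphertext satisfies \[ F\big(M_f^{(0)},M_f^{(1)}\big)\;\ge\;1-\frac1\eta . \]
   Context: Let $d_1\ge d_2\ge1$, $\mathcal H_M=(\mathbb C^2)^{\otimes d_1}$, $\mathcal H_{M_c}=(\mathbb C^2)^{\otimes d_2}$, and $U_k=\bigotimes_{j}X^{k_{2j-1}}Z^{k_{2j}}$ (Pauli $X,Z$) for bit strings $k$. $M_o$ is a strictly positive definite density matrix on $\mathcal H_M$, $M_c$ a density matrix on $\mathcal H_{M_c}$; $M_o'=U_kM_oU_k^\dagger$ ($k\in\{0,1\}^{2d_1}$), $M_c'=U_{k'}M_cU_{k'}^\dagger$ ($k'\in\{0,1\}^{2d_2}$), $V|\psi\rangle=|\psi\rangle\otimes|0\rangle^{\otimes(d_1-d_2)}$, $M_c''=VM_c'V^\dagger$. For $\eta\in\mathbb Z^+$, on $\mathbb C^2\otimes\mathcal H_M$ (blocks w.r.t. the first qubit), $M_a^{(0)}=\begin{pmatrix}\frac12M_o'&0\\0&\frac12M_o'\end{pmatrix}$, $M_a^{(1)}=\begin{pmatrix}\frac12M_o'&\frac1\eta M_c''\\\frac1\eta(M_c'')^\dagger&\frac12M_o'\end{pmatrix}$, $M_f^{(b)}=U_\sigma M_a^{(b)}U_\sigma^\dagger$ with $U_\sigma$ a permutation matrix. Standing assumption: for a threshold $\varepsilon>0$, $1/\eta<\varepsilon$ and $\frac1{\eta^2}\|M_c''(M_o')^{-1}M_c''\|\le\frac14\lambda_{\min}(M_o')$.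 Fidelity: $F(\rho,\tau)=\operatorname{Tr}\sqrt{\sqrt\rho\,\tau\sqrt\rho}$. *)

(* Defs.v *)
(* Complex scalars: an arbitrary numClosedFieldType C
   (e.g. complex R for R : realType, or algC). *)
From mathcomp Require Import all_boot all_order all_algebra.
From mathcomp Require Import fingroup perm mxtens.
From Stdlib Require Import ClassicalEpsilon.
Set Implicit Arguments. Unset Strict Implicit. Unset Printing Implicit Defensive.
Import Order.TTheory GRing.Theory Num.Theory.
Local Open Scope ring_scope.

Section Defs.
Variable C : numClosedFieldType.

Definition adjmx {m n} (A : 'M[C]_(m, n)) : 'M[C]_(n, m) :=
  (map_mx (fun x => x^*) A)^T.

Definition psd {n} (A : 'M[C]_n) : Prop :=
  forall v : 'cV[C]_n, 0 <= (adjmx v *m A *m v) 0 0.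

Definition posdef {n} (A : 'M[C]_n) : Prop :=
  forall v : 'cV[C]_n, v != 0 -> 0 < (adjmx v *m A *m v) 0 0.

Definition density {n} (A : 'M[C]_n) : Prop := psd A /\ \tr A = 1.

(* the (unique) positive semidefinite square root; 0 if none exists *)
Definition sqrtm {n} (A : 'M[C]_n) : 'M[C]_n :=
  epsilon (inhabits 0) (fun S : 'M[C]_n => psd S /\ S *m S = A).

Definition fidelity {n} (rho tau : 'M[C]_n) : C :=
  \tr (sqrtm (sqrtm rho *m tau *m sqrtm rho)).

(* smallest / largest eigenvalue (w.r.t. the order of C); 0 by default *)
Definition lambda_min {n} (A : 'M[C]_n) : C :=
  epsilon (inhabits 0) (fun l : C => eigenvalue A l /\
                          forall b, eigenvalue A b -> l <= b).
Definition lambda_max {n} (A : 'M[C]_n) : C :=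
  epsilon (inhabits 0) (fun l : C => eigenvalue A l /\
                          forall b, eigenvalue A b -> b <= l).

Definition opnorm {m n} (A : 'M[C]_(m, n)) : C :=
  sqrtC (lambda_max (adjmx A *m A)).

Definition pauliX : 'M[C]_2 := \matrix_(i, j) (if i == j then 0 else 1).
Definition pauliZ : 'M[C]_2 :=
  \matrix_(i, j) (if i == j then (if val i == 0%N then 1 else -1) else 0).

Definition pauli1 (ab : bool * bool) : 'M[C]_2 :=
  (if ab.1 then pauliX else 1%:M) *m (if ab.2 then pauliZ else 1%:M).

(* tensor product of single-qubit factors, first pair = first qubit *)
Fixpoint pauli_seq (s : seq (bool * bool)) : 'M[C]_(2 ^ size s) :=
  match s return 'M[C]_(2 ^ size s) with
  | [::] => 1%:M
  | p :: s' => castmx (esym (expnS 2 (size s')), esym (expnS 2 (size s')))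
                 (tensmx (pauli1 p) (pauli_seq s'))
  end.

(* U_k for k in {0,1}^{2d}, given as the d pairs (k_{2j-1}, k_{2j}) *)
Definition pauliU {d} (k : d.-tuple (bool * bool)) : 'M[C]_(2 ^ d) :=
  castmx (congr1 (expn 2) (size_tuple k), congr1 (expn 2) (size_tuple k))
    (pauli_seq k).

Definition conjmx {m n} (U : 'M[C]_(m, n)) (A : 'M[C]_n) : 'M[C]_m :=
  U *m A *m adjmx U.

Definition ket0 (m : nat) : 'cV[C]_(2 ^ m) :=
  \col_i (if val i == 0%N then 1 else 0).

Lemma Vdim_proof (d1 d2 : nat) : (d2 <= d1)%N -> (2 ^ d2 * 2 ^ (d1 - d2) = 2 ^ d1)%N.
Proof. by move=> h; rewrite -expnD subnKC. Qed.

Definition Vmx (d1 d2 : nat) (h : (d2 <= d1)%N) : 'M[C]_(2 ^ d1, 2 ^ d2) :=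
  castmx (Vdim_proof h, muln1 (2 ^ d2)%N)
    (tensmx (1%:M : 'M[C]_(2 ^ d2)) (ket0 (d1 - d2))).

(* M_a^{(0)} and M_a^{(1)} on C^2 (x) H_M, blocks w.r.t. the first qubit *)
Definition Ma0 {n} (Mo' : 'M[C]_n) : 'M[C]_(n + n) :=
  block_mx (2^-1 *: Mo') 0 0 (2^-1 *: Mo').
Definition Ma1 {n} (eta : nat) (Mo' Mc'' : 'M[C]_n) : 'M[C]_(n + n) :=
  block_mx (2^-1 *: Mo') (eta%:R^-1 *: Mc'')
           (eta%:R^-1 *: adjmx Mc'') (2^-1 *: Mo').

End Defs.

(* Main.v *)
Require Import Defs.
From mathcomp Require Import all_boot all_order all_algebra.
From mathcomp Require Import fingroup perm mxtens spectral sesquilinear.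
From mathcomp Require Import ring.
Set Implicit Arguments. Unset Strict Implicit. Unset Printing Implicit Defensive.
Import Order.TTheory GRing.Theory Num.Theory.
Local Open Scope ring_scope.

Section GE.
Variable F : fieldType.

Definition ppm m n (A : 'M[F]_(m, n)) :=
  forall i j i' j', A i j != 0 -> A i' j' != 0 -> (i == i') = (j == j').

Lemma GE_perm m n (A : 'M[F]_(m, n)) : ppm A ->
  exists s : 'S_m, (Gaussian_elimination_ A).1.1 = perm_mx s.
Proof.
elim: m n A => [|m IH] [|n] A hA /=; try by exists 1%g; rewrite perm_mx1.
case: pickP => [[i j] /= hij|_]; last by exists 1%g; rewrite perm_mx1.
have hv : dlsubmx (xrow i 0 (xcol j 0 A)) = 0.
  apply/matrixP => k l; rewrite !mxE [l]ord1.
  have e0 : lshift n (0 : 'I_1) = 0 :> 'I_(1 + n) by apply: val_inj.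
  rewrite e0 tpermR.
  apply/eqP; apply: contraT => hk.
  have := hA _ _ _ _ hk hij; rewrite eqxx => /eqP hk'.
  have : tperm i 0 (rshift 1 k) = tperm i 0 0 by rewrite hk' tpermR.
  by move/perm_inj/(congr1 val).
have hA' : ppm (drsubmx (xrow i 0 (xcol j 0 A))).
  move=> k l k' l'; rewrite !mxE => h1 h2.
  have := hA _ _ _ _ h1 h2.
  have r1 : forall p (a b : 'I_p), (rshift 1 a == rshift 1 b) = (a == b).
    by move=> p a b; rewrite -val_eqE /= eqn_add2l val_eqE.
  by rewrite !(inj_eq perm_inj) !r1.
rewrite hv scaler0 mul0mx subr0.
have [s' hs'] := IH _ _ hA'.
case E: (Gaussian_elimination_ _) => [[L U] r] /=.
rewrite E /= in hs'; rewrite hs'.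
exists (tperm i 0 * lift0_perm s')%g.
have -> : block_mx 1 0 0 (perm_mx s') = lift0_mx (perm_mx s') :> 'M[F]_(1 + m) by [].
by rewrite lift0_mx_perm xrowE /tperm_mx -perm_mxM.
Qed.
End GE.

Section Aux.
Variable C : numClosedFieldType.
Implicit Types (m n p : nat).

Lemma adjmxE m n (A : 'M[C]_(m, n)) i j : adjmx A i j = (A j i)^*.
Proof. by rewrite /adjmx !mxE. Qed.

Lemma adjmxK m n (A : 'M[C]_(m, n)) : adjmx (adjmx A) = A.
Proof. by apply/matrixP => i j; rewrite !adjmxE conjCK. Qed.

Lemma adjmx_mul m n p (A : 'M[C]_(m, n)) (B : 'M[C]_(n, p)) :
  adjmx (A *m B) = adjmx B *m adjmx A.
Proof.
apply/matrixP => i j; rewrite adjmxE !mxE rmorph_sum; apply: eq_bigr => k _.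
by rewrite !adjmxE rmorphM mulrC.
Qed.

Lemma adjmxD m n (A B : 'M[C]_(m, n)) : adjmx (A + B) = adjmx A + adjmx B.
Proof. by apply/matrixP => i j; rewrite !(adjmxE, mxE) rmorphD. Qed.

Lemma adjmxN m n (A : 'M[C]_(m, n)) : adjmx (- A) = - adjmx A.
Proof. by apply/matrixP => i j; rewrite !(adjmxE, mxE) rmorphN. Qed.

Lemma adjmxB m n (A B : 'M[C]_(m, n)) : adjmx (A - B) = adjmx A - adjmx B.
Proof. by rewrite adjmxD adjmxN. Qed.

Lemma adjmxZ m n a (A : 'M[C]_(m, n)) : adjmx (a *: A) = a^* *: adjmx A.
Proof. by apply/matrixP => i j; rewrite !(adjmxE, mxE) rmorphM. Qed.

Lemma adjmx0 m n : adjmx (0 : 'M[C]_(m, n)) = 0.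
Proof. by apply/matrixP => i j; rewrite !(adjmxE, mxE) rmorph0. Qed.

Lemma adjmx1 n : adjmx (1%:M : 'M[C]_n) = 1%:M.
Proof.
by apply/matrixP => i j; rewrite !(adjmxE, mxE) rmorphMn rmorph1 eq_sym.
Qed.

Lemma adjmx_block m1 m2 n1 n2 (a : 'M[C]_(m1, n1)) (b : 'M[C]_(m1, n2))
  (c : 'M[C]_(m2, n1)) (d : 'M[C]_(m2, n2)) :
  adjmx (block_mx a b c d) = block_mx (adjmx a) (adjmx c) (adjmx b) (adjmx d).
Proof. by rewrite /adjmx map_block_mx tr_block_mx. Qed.

Lemma adjmx_row m n1 n2 (a : 'M[C]_(m, n1)) (b : 'M[C]_(m, n2)) :
  adjmx (row_mx a b) = col_mx (adjmx a) (adjmx b).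
Proof. by rewrite /adjmx map_row_mx tr_row_mx. Qed.

Lemma adjmx_col m1 m2 n (a : 'M[C]_(m1, n)) (b : 'M[C]_(m2, n)) :
  adjmx (col_mx a b) = row_mx (adjmx a) (adjmx b).
Proof. by rewrite /adjmx map_col_mx tr_col_mx. Qed.

Lemma adjmx_cast m n m' n' (e : (m = m') * (n = n')) (A : 'M[C]_(m, n)) :
  adjmx (castmx e A) = castmx (e.2, e.1) (adjmx A).
Proof. by rewrite /adjmx map_castmx trmx_cast. Qed.


Lemma mxtrace_adj n (A : 'M[C]_n) : \tr (adjmx A) = (\tr A)^*.
Proof. by rewrite /mxtrace rmorph_sum; apply: eq_bigr => i _; rewrite adjmxE. Qed.

Definition qf2 n (P : 'M[C]_n) (x y : 'cV[C]_n) : C := (adjmx x *m P *m y) 0 0.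

Lemma qf2_congr m n (T : 'M[C]_(m, n)) P x y :
  qf2 (adjmx T *m P *m T) x y = qf2 P (T *m x) (T *m y).
Proof. by rewrite /qf2 adjmx_mul !mulmxA. Qed.

Lemma psd_qf n (P : 'M[C]_n) : psd P <-> forall v, 0 <= qf2 P v v.
Proof. by []. Qed.

Lemma psd_congr m n (T : 'M[C]_(m, n)) P : psd P -> psd (adjmx T *m P *m T).
Proof. by move=> hP v; have := hP (T *m v); rewrite -/(qf2 _ _ _) -qf2_congr. Qed.

Lemma qf2D n (P Q : 'M[C]_n) x y : qf2 (P + Q) x y = qf2 P x y + qf2 Q x y.
Proof. by rewrite /qf2 mulmxDr mulmxDl mxE. Qed.

Lemma qf2N n (P : 'M[C]_n) x y : qf2 (- P) x y = - qf2 P x y.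
Proof. by rewrite /qf2 mulmxN mulNmx mxE. Qed.

Lemma qf2B n (P Q : 'M[C]_n) x y : qf2 (P - Q) x y = qf2 P x y - qf2 Q x y.
Proof. by rewrite qf2D qf2N. Qed.

Lemma qf2Z n a (P : 'M[C]_n) x y : qf2 (a *: P) x y = a * qf2 P x y.
Proof. by rewrite /qf2 -scalemxAr -scalemxAl mxE. Qed.

Lemma qf2Dr n (P : 'M[C]_n) x y z : qf2 P x (y + z) = qf2 P x y + qf2 P x z.
Proof. by rewrite /qf2 mulmxDr mxE. Qed.

Lemma qf2Dl n (P : 'M[C]_n) x y z : qf2 P (x + z) y = qf2 P x y + qf2 P z y.
Proof. by rewrite /qf2 adjmxD !mulmxDl mxE. Qed.

Lemma qf2Zr n (P : 'M[C]_n) x y a : qf2 P x (a *: y) = a * qf2 P x y.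
Proof. by rewrite /qf2 -scalemxAr mxE. Qed.

Lemma qf2Zl n (P : 'M[C]_n) x y a : qf2 P (a *: x) y = a^* * qf2 P x y.
Proof. by rewrite /qf2 adjmxZ -!scalemxAl mxE. Qed.

Lemma qf2Nr n (P : 'M[C]_n) x y : qf2 P x (- y) = - qf2 P x y.
Proof. by rewrite /qf2 mulmxN mxE. Qed.

Lemma qf2Nl n (P : 'M[C]_n) x y : qf2 P (- x) y = - qf2 P x y.
Proof. by rewrite /qf2 adjmxN !mulNmx mxE. Qed.

Lemma qf2_herm n (P : 'M[C]_n) x y : adjmx P = P -> qf2 P y x = (qf2 P x y)^*.
Proof.
move=> hP; rewrite /qf2 -adjmxE !adjmx_mul adjmxK hP mulmxA //.
Qed.

Lemma qf2_delta n (P : 'M[C]_n) i j : qf2 P (delta_mx i 0) (delta_mx j 0) = P i j.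
Proof.
rewrite /qf2.
have -> : adjmx (delta_mx i 0 : 'cV[C]_n) = delta_mx 0 i.
  apply/matrixP => a b; rewrite adjmxE !mxE.
  by case: (b == i); case: (a == 0); rewrite /= ?rmorph1 ?rmorph0.
by rewrite -rowE -colE !mxE.
Qed.

Lemma psd_real n (P : 'M[C]_n) x : psd P -> (qf2 P x x)^* = qf2 P x x.
Proof. by move=> hP; apply: conj_Creal; apply: ger0_real; apply: hP. Qed.

Lemma cD (x y : C) : (x + y)^* = x^* + y^*. Proof. exact: rmorphD. Qed.
Lemma cM (x y : C) : (x * y)^* = x^* * y^*. Proof. exact: rmorphM. Qed.
Lemma cN (x : C) : (- x)^* = - x^*. Proof. exact: rmorphN. Qed.
Lemma cB (x y : C) : (x - y)^* = x^* - y^*. Proof. exact: rmorphB. Qed.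

Lemma psd_herm n (P : 'M[C]_n) : psd P -> adjmx P = P.
Proof.
move=> hP; apply/matrixP => i j; rewrite adjmxE.
set x : 'cV[C]_n := delta_mx i 0; set y : 'cV[C]_n := delta_mx j 0.
have h1 := psd_real (x + y) hP.
have h2 := psd_real (x + 'i *: y) hP.
rewrite !(qf2Dl, qf2Dr, qf2Zl, qf2Zr) in h1 h2.
rewrite !(cD, cM) ?conjCK !(psd_real _ hP) conjCi in h1 h2.
idtac.
rewrite -!qf2_delta -/x -/y.
set u := qf2 P x y in h1 h2 *; set w := qf2 P y x in h1 h2 *.
set a := qf2 P x x in h1 h2; set b := qf2 P y y in h1 h2.
have e1 : u^* + w^* = u + w.
  apply/eqP; rewrite -subr_eq0.
  have -> : u^* + w^* - (u + w) = (a + u^* + (w^* + b)) - (a + u + (w + b)) by ring.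
  by rewrite h1 subrr.
have e2 : - u^* + w^* = u - w.
  have hi : ('i : C) != 0 by rewrite neq0Ci.
  apply/eqP; rewrite -subr_eq0.
  have : 'i * (- u^* + w^* - (u - w)) = 0.
    transitivity ((a + - 'i * u^* + ('i * w^* + 'i * (- 'i * b))) -
      (a + 'i * u + (- 'i * w + - 'i * ('i * b)))); first by ring.
    by rewrite h2 subrr.
  by move/eqP; rewrite mulf_eq0 (negbTE (neq0Ci C)).
have h2n : (2 : C) != 0 by rewrite pnatr_eq0.
apply: (mulfI h2n).
transitivity ((u^* + w^*) + (- u^* + w^*)); first by ring.
rewrite e1 e2; ring.
Qed.


Lemma adj_t m n (A : 'M[C]_(m, n)) : adjmx A = map_mx (@Num.conj C) A^T.
Proof. by rewrite /adjmx map_trmx. Qed.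

Lemma unitary_adj n (U : 'M[C]_n) : U *m adjmx U = 1%:M -> adjmx U *m U = 1%:M.
Proof. exact: mulmx1C. Qed.

Lemma qf2_diag n (d : 'rV[C]_n) x y :
  qf2 (diag_mx d) x y = \sum_j d 0 j * ((x j 0)^* * y j 0).
Proof.
rewrite /qf2 mul_mx_diag !mxE; apply: eq_bigr => j _.
by rewrite !mxE; ring.
Qed.

Lemma qf2_diag_ge0 n (d : 'rV[C]_n) x :
  (forall j, 0 <= d 0 j) -> 0 <= qf2 (diag_mx d) x x.
Proof.
move=> hd; rewrite qf2_diag; apply: sumr_ge0 => j _.
by apply: mulr_ge0 => //; rewrite mulrC mul_conjC_ge0.
Qed.

Lemma psd_spec n (P : 'M[C]_n) : psd P -> exists (U : 'M[C]_n) (d : 'rV[C]_n),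
  [/\ U *m adjmx U = 1%:M, (forall j, 0 <= d 0 j) & P = adjmx U *m diag_mx d *m U].
Proof.
move=> hP; have hH := psd_herm hP.
have hN : P \is normalmx by apply/normalmxP; rewrite -adj_t hH.
have /orthomx_spectralP hE := hN.
have hU := spectral_unitarymx P.
have hU1 : spectralmx P *m adjmx (spectralmx P) = 1%:M.
  by rewrite adj_t; apply/unitarymxP.
set U := spectralmx P in hE hU hU1; set d := spectral_diag P in hE.
have hE' : P = adjmx U *m diag_mx d *m U by rewrite hE invmx_unitary // adj_t.
exists U, d; split => // j.
have := hP (adjmx U *m delta_mx j 0).
rewrite -/(qf2 _ _ _) -qf2_congr adjmxK hE' !mulmxA hU1 mul1mx -mulmxA hU1 mulmx1.
by rewrite qf2_delta mxE eqxx mulr1n.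
Qed.

Lemma diag_mxM n (d e : 'rV[C]_n) :
  diag_mx d *m diag_mx e = diag_mx (\row_j (d 0 j * e 0 j)).
Proof.
apply/matrixP => i j; rewrite mul_diag_mx !mxE.
by case: (i =P j) => [->|_]; rewrite ?mulr1n ?mulr0n ?mulr0.
Qed.

Lemma psd_sqrt_ex n (P : 'M[C]_n) : psd P -> exists S : 'M[C]_n, psd S /\ S *m S = P.
Proof.
move=> /psd_spec [U [d [hU hd ->]]].
have hU' := unitary_adj hU.
exists (adjmx U *m diag_mx (\row_j sqrtC (d 0 j)) *m U); split.
  apply: psd_congr => v; apply: qf2_diag_ge0 => j.
  by rewrite mxE sqrtC_ge0.
rewrite !mulmxA -[_ *m U *m adjmx U]mulmxA hU mulmx1 -[_ *m diag_mx _ *m diag_mx _]mulmxA.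
rewrite diag_mxM; congr (_ *m diag_mx _ *m _); apply/rowP => j.
by rewrite !mxE -expr2 sqrtCK.
Qed.

Lemma sqrtm_spec n (P : 'M[C]_n) : psd P -> psd (sqrtm P) /\ sqrtm P *m sqrtm P = P.
Proof.
move=> hP; rewrite /sqrtm.
exact: (@ClassicalEpsilon.epsilon_spec _ _ (fun S : 'M[C]_n => psd S /\ S *m S = P) (psd_sqrt_ex hP)).
Qed.


Lemma mxtrace_conj n (U A : 'M[C]_n) : adjmx U *m U = 1%:M ->
  \tr (U *m A *m adjmx U) = \tr A.
Proof. by move=> hU; rewrite mxtrace_mulC mulmxA hU mul1mx. Qed.

Lemma mxtrace_conj' n (U A : 'M[C]_n) : U *m adjmx U = 1%:M ->
  \tr (adjmx U *m A *m U) = \tr A.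
Proof. by move=> hU; rewrite mxtrace_mulC mulmxA hU mul1mx. Qed.

Lemma trace_bound n (S M : 'M[C]_n) : psd S -> psd (S *m S - adjmx M *m M) ->
  \tr M \is Num.real -> \tr M <= \tr S.
Proof.
move=> hS hSM hr.
have [U [s [hU hs hSE]]] := psd_spec hS.
have hU' := unitary_adj hU.
set N := U *m M *m adjmx U.
have cancelU : forall (X : 'M[C]_n), X *m U *m adjmx U = X.
  by move=> X; rewrite -mulmxA hU mulmx1.
have cancelU' : forall (X : 'M[C]_n), X *m adjmx U *m U = X.
  by move=> X; rewrite -mulmxA hU' mulmx1.
have trM : \tr M = \tr N by rewrite /N mxtrace_conj.
have trS : \tr S = \sum_j s 0 j by rewrite hSE mxtrace_conj' // mxtrace_diag.
have key : forall j, `|N j j| <= s 0 j.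
  move=> j; have := hSM (adjmx U *m delta_mx j 0).
  rewrite -/(qf2 _ _ _) -qf2_congr adjmxK qf2_delta.
  have -> : U *m (S *m S - adjmx M *m M) *m adjmx U =
      diag_mx (\row_j (s 0 j * s 0 j)) - adjmx N *m N.
    rewrite /N !adjmx_mul adjmxK hSE -diag_mxM.
    rewrite mulmxBr mulmxBl; congr (_ - _).
      by rewrite !mulmxA !cancelU hU mul1mx.
    by rewrite !mulmxA !cancelU'.
  move=> h0.
  have h : \sum_i adjmx N j i * N i j <= s 0 j * s 0 j.
    by move: h0; rewrite !mxE eqxx mulr1n subr_ge0.
  have h2 : `|N j j| ^+ 2 <= s 0 j ^+ 2.
    rewrite [s 0 j ^+ 2]expr2; apply: le_trans h; rewrite normCKC.
    rewrite (bigD1 j) //= adjmxE lerDl.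
    by apply: sumr_ge0 => i _; rewrite adjmxE mulrC mul_conjC_ge0.
  by rewrite -ler_sqr ?qualifE //=.
rewrite trM; apply: le_trans (real_ler_norm _) _; first by rewrite -trM.
rewrite trS /mxtrace; apply: le_trans (ler_norm_sum _ _ _) _.
by apply: ler_sum => j _; apply: key.
Qed.


Lemma seq_max (s : seq C) (x0 : C) : all (fun x => x \is Num.real) (x0 :: s) ->
  exists2 x, x \in x0 :: s & forall y, y \in x0 :: s -> y <= x.
Proof.
elim: s x0 => [|y s IH] x0.
  by move=> _; exists x0; rewrite ?inE // => y; rewrite inE => /eqP ->.
rewrite [all _ _]/= => /andP [hx0 hys]; have [x hx hmax] := IH y hys.
have hall : all (fun x => x \is Num.real) (y :: s) := hys.
have hxr : x \is Num.real := (elimT allP hall) x hx.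
have /orP [hle|hge] := real_leVge hx0 hxr.
  exists x; first by rewrite inE hx orbT.
  by move=> z; rewrite inE => /orP [/eqP ->|/hmax].
exists x0; first by rewrite inE eqxx.
move=> z; rewrite inE => /orP [/eqP -> //|/hmax hz]; exact: le_trans hz hge.
Qed.

Lemma ex_max n (f : 'I_n -> C) : (0 < n)%N -> (forall j, f j \is Num.real) ->
  exists j0, forall j, f j <= f j0.
Proof.
case: n f => [//|n] f _ hr.
have := @seq_max [seq f j | j <- enum 'I_n.+1] (f ord0).
case.
  apply/allP => x; rewrite inE => /orP [/eqP ->|/mapP [j _ ->]] //.
move=> x hx hmax.
have [j0 hj0] : exists j0, x = f j0.
  move: hx; rewrite inE => /orP [/eqP ->|/mapP [j _ ->]]; first by exists ord0.
  by exists j.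
exists j0 => j; rewrite -hj0; apply: hmax.
by rewrite inE; apply/orP; right; apply: map_f; rewrite mem_enum.
Qed.

Lemma ex_min n (f : 'I_n -> C) : (0 < n)%N -> (forall j, f j \is Num.real) ->
  exists j0, forall j, f j0 <= f j.
Proof.
move=> hn hr; have hr' : forall j, - f j \is Num.real by move=> j; rewrite realN.
have [j0 hj0] := @ex_max n (fun j => - f j) hn hr'.
by exists j0 => j; rewrite -lerN2 hj0.
Qed.

Lemma delta_diag n (d : 'rV[C]_n) j :
  (delta_mx 0 j : 'rV[C]_n) *m diag_mx d = d 0 j *: delta_mx 0 j.
Proof.
apply/rowP => k; rewrite mul_mx_diag !mxE.
rewrite eqxx /=; case: (k =P j) => [->|_]; rewrite ?mulr1n ?mul1r ?mulr1 ?mul0r ?mulr0 //.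
Qed.

Lemma eig_diag n (U : 'M[C]_n) (d : 'rV[C]_n) a : U *m adjmx U = 1%:M ->
  eigenvalue (adjmx U *m diag_mx d *m U) a <-> exists j, a = d 0 j.
Proof.
move=> hU; have hU' := unitary_adj hU; split.
  move/eigenvalueP => [v hv vn0].
  set w := v *m adjmx U.
  have hw : w *m diag_mx d = a *: w.
    by rewrite /w scalemxAl -hv !mulmxA -(mulmxA _ U) hU mulmx1.
  have wn0 : w != 0.
    apply: contraNneq vn0 => hw0.
    by rewrite -[v]mulmx1 -hU' mulmxA -/w hw0 mul0mx.
  clearbody w.
  have [j hj] : exists j, w 0 j != 0.
    case/boolP: [exists j, w 0 j != 0] => [/existsP //|/existsPn h].
    exfalso; apply: (negP wn0); apply/eqP/rowP => j.
    by move: (h j); rewrite negbK mxE => /eqP.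
  exists j; move/rowP: hw => /(_ j); rewrite mul_mx_diag !mxE => h.
  by apply: (mulfI hj); rewrite h mulrC.
move=> [j ->]; apply/eigenvalueP; exists (delta_mx 0 j *m U).
  by rewrite !mulmxA -(mulmxA _ U) hU mulmx1 delta_diag scalemxAl.
apply: contraTneq isT => h0.
have : ((delta_mx 0 j : 'rV[C]_n) *m U *m adjmx U) 0 j = 0 by rewrite h0 mul0mx mxE.
by rewrite -mulmxA hU mulmx1 mxE !eqxx /= => /eqP; rewrite oner_eq0.
Qed.

Lemma psd1 n : psd (1%:M : 'M[C]_n).
Proof.
move=> v; rewrite -/(qf2 _ _ _); have -> : (1%:M : 'M[C]_n) = diag_mx (const_mx 1).
  by apply/matrixP => i j; rewrite !mxE.
by apply: qf2_diag_ge0 => j; rewrite mxE ler01.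
Qed.

Lemma qf2_unit n (U : 'M[C]_n) x y : adjmx U *m U = 1%:M ->
  qf2 1%:M (U *m x) (U *m y) = qf2 1%:M x y.
Proof. by move=> hU; rewrite -qf2_congr mulmx1 hU. Qed.

Lemma rayleigh_max n (P : 'M[C]_n) v : psd P -> (0 < n)%N ->
  qf2 P v v <= lambda_max P * qf2 1%:M v v.
Proof.
move=> hP hn; have [U [d [hU hd hE]]] := psd_spec hP.
have hU' := unitary_adj hU.
have hspec : eigenvalue P (lambda_max P) /\
    forall b, eigenvalue P b -> b <= lambda_max P.
  apply: (@ClassicalEpsilon.epsilon_spec _ _ (fun l : C => eigenvalue P l /\
                          forall b, eigenvalue P b -> b <= l)).
  have [j0 hj0] := @ex_max n (fun j => d 0 j) hn (fun j => ger0_real (hd j)).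
  exists (d 0 j0); rewrite hE; split; first by apply/eig_diag => //; exists j0.
  by move=> b /eig_diag - /(_ hU) [j ->].
have hle : forall j, d 0 j <= lambda_max P.
  by move=> j; apply: hspec.2; rewrite hE; apply/eig_diag => //; exists j.
set l := lambda_max P in hle *.
rewrite hE qf2_congr -(qf2_unit v v hU') qf2_diag.
have -> : (1%:M : 'M[C]_n) = diag_mx (const_mx 1) by apply/matrixP => i j; rewrite !mxE.
rewrite qf2_diag mulr_sumr; apply: ler_sum => j _; rewrite [const_mx 1 0 j]mxE mul1r.
by apply: ler_wpM2r => //; rewrite mulrC mul_conjC_ge0.
Qed.

Lemma rayleigh_min n (P : 'M[C]_n) v : psd P -> (0 < n)%N ->
  lambda_min P * qf2 1%:M v v <= qf2 P v v.
Proof.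
move=> hP hn; have [U [d [hU hd hE]]] := psd_spec hP.
have hU' := unitary_adj hU.
have hspec : eigenvalue P (lambda_min P) /\
    forall b, eigenvalue P b -> lambda_min P <= b.
  apply: (@ClassicalEpsilon.epsilon_spec _ _ (fun l : C => eigenvalue P l /\
                          forall b, eigenvalue P b -> l <= b)).
  have [j0 hj0] := @ex_min n (fun j => d 0 j) hn (fun j => ger0_real (hd j)).
  exists (d 0 j0); rewrite hE; split; first by apply/eig_diag => //; exists j0.
  by move=> b /eig_diag - /(_ hU) [j ->].
have hle : forall j, lambda_min P <= d 0 j.
  by move=> j; apply: hspec.2; rewrite hE; apply/eig_diag => //; exists j.
set l := lambda_min P in hle *.
rewrite hE qf2_congr -(qf2_unit v v hU') qf2_diag.
have -> : (1%:M : 'M[C]_n) = diag_mx (const_mx 1) by apply/matrixP => i j; rewrite !mxE.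
rewrite qf2_diag mulr_sumr; apply: ler_sum => j _; rewrite [const_mx 1 0 j]mxE mul1r.
by apply: ler_wpM2r => //; rewrite mulrC mul_conjC_ge0.
Qed.


Lemma cV (x : C) : (x^-1)^* = (x^*)^-1. Proof. exact: fmorphV. Qed.

Lemma CS n (P : 'M[C]_n) x y : psd P ->
  qf2 P x y * (qf2 P x y)^* <= qf2 P x x * qf2 P y y.
Proof.
move=> hP; have hH := psd_herm hP.
have ha := hP x; have hb := hP y; rewrite -/(qf2 _ _ _) in ha hb.
have har := psd_real x hP; have hbr := psd_real y hP.
set a := qf2 P x x in ha har *; set b := qf2 P y y in hb hbr *.
set c := qf2 P x y.
have key : forall t, 0 <= a + t * c + t^* * c^* + t^* * t * b.
  move=> t; have := hP (x + t *: y); rewrite -/(qf2 _ _ _).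
  rewrite !(qf2Dl, qf2Dr, qf2Zl, qf2Zr) (qf2_herm x y hH) -/a -/b -/c.
  suff -> : a + t * c + (t^* * c^* + t^* * (t * b)) = a + t * c + t^* * c^* + t^* * t * b by [].
  by ring.
have [b0|bn0] := eqVneq b 0.
  have [c0|cn0] := eqVneq c 0; first by rewrite c0 b0 !mulr0 mul0r.
  have := key (- (a + 1) / c).
  have e : (- (a + 1) / c)^* * c^* = - (a + 1).
    by rewrite -cM divfK // cN cD har rmorph1.
  rewrite e b0 mulr0 addr0 divfK //.
  have : 0 <= a + 1 by apply: addr_ge0.
  rewrite -oppr_le0 => h1 h2.
  have : a + - (a + 1) + - (a + 1) < 0.
    have -> : a + - (a + 1) + - (a + 1) = - (a + 1) - 1 by ring.
    by rewrite subr_lt0; apply: le_lt_trans h1 _; rewrite ltr01.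
  by move=> hlt; rewrite (lt_geF hlt) in h2.
have bp : 0 < b by rewrite lt_def bn0 hb.
have := key (- c^* / b).
have -> : a + - c^* / b * c + (- c^* / b)^* * c^* + (- c^* / b)^* * (- c^* / b) * b =
    a - c * c^* / b.
  rewrite cM cN conjCK cV hbr.
  by field.
rewrite subr_ge0 ler_pdivrMr //.
Qed.

Lemma opnorm_bound n (H : 'M[C]_n) v : psd H -> (0 < n)%N ->
  qf2 H v v <= opnorm H * qf2 1%:M v v.
Proof.
move=> hH hn.
have hq := hH v; rewrite -/(qf2 _ _ _) in hq.
have ht := psd1 v; rewrite -/(qf2 _ _ _) in ht.
set q := qf2 H v v in hq *; set t := qf2 1%:M v v in ht *.
set L := lambda_max (adjmx H *m H).
have hHH : psd (adjmx H *m H) by rewrite -[adjmx H](mulmx1); apply: psd_congr; apply: psd1.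
have hL := rayleigh_max v hHH hn; rewrite -/t -/L in hL.
have e1 : qf2 (adjmx H *m H) v v = qf2 1%:M (H *m v) (H *m v).
  by rewrite -qf2_congr mulmx1.
have hcs := CS v (H *m v) (@psd1 n).
have e2 : qf2 1%:M v (H *m v) = q by rewrite /q /qf2 mulmx1 mulmxA.
rewrite e2 -e1 (conj_Creal (ger0_real hq)) in hcs.
have hq2 : q * q <= L * (t * t).
  apply: le_trans hcs _; rewrite mulrCA; apply: ler_wpM2l => //.
have [t0|tn0] := eqVneq t 0.
  rewrite t0 mulr0 in hq2 *; rewrite mulr0 in hq2.
  have : q * q == 0 by rewrite eq_le hq2 mulr_ge0.
  by rewrite mulr0 mulf_eq0 orbb => /eqP hq0; rewrite hq0.
have tp : 0 < t by rewrite lt_def tn0 ht.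
have hL0 : 0 <= L.
  have : 0 <= L * (t * t) by apply: le_trans hq2; apply: mulr_ge0.
  by rewrite pmulr_lge0 // mulr_gt0.
rewrite /opnorm -/L -ler_sqr ?qualifE /= ?mulr_ge0 ?sqrtC_ge0 //.
by rewrite exprMn sqrtCK !expr2.
Qed.


Lemma inv_unitary n (U : 'M[C]_n) : U *m adjmx U = 1%:M -> invmx U = adjmx U.
Proof.
move=> hU; have [Uu _] := mulmx1_unit hU.
by rewrite -[invmx U]mulmx1 -hU mulmxA mulVmx // mul1mx.
Qed.

Lemma adjmx_perm n (s : 'S_n) : adjmx (perm_mx s : 'M[C]_n) = perm_mx s^-1.
Proof. by rewrite /adjmx map_perm_mx tr_perm_mx. Qed.

Lemma perm_unitary n (s : 'S_n) : (perm_mx s : 'M[C]_n) *m adjmx (perm_mx s) = 1%:M.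
Proof. by rewrite adjmx_perm -perm_mxM mulgV perm_mx1. Qed.

Lemma adjmx_pid m n r : adjmx (pid_mx r : 'M[C]_(m, n)) = pid_mx r.
Proof. by rewrite /adjmx map_pid_mx tr_pid_mx. Qed.

Lemma pinvmx_iso m n (V : 'M[C]_(m, n)) : ppm V -> adjmx V *m V = 1%:M ->
  pinvmx V = adjmx V.
Proof.
move=> hV hVV.
have [s hs] : exists s : 'S_m, col_ebase V = perm_mx s.
  by rewrite /col_ebase unlock; apply: GE_perm.
have hfull : row_full V by apply/row_fullP; exists (adjmx V).
have hr : \rank V = n by apply/eqP.
have h1 : pinvmx V *m V = 1%:M := mulVpmx hfull.
have h2 : adjmx (V *m pinvmx V) = V *m pinvmx V.
  have -> : V *m pinvmx V = perm_mx s *m pid_mx (\rank V) *m adjmx (perm_mx s).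
    rewrite -{1}(mulmx_ebase V) /pinvmx -!mulmxA (mulmxA (row_ebase V)) mulmxV ?row_ebase_unit //.
    rewrite mul1mx (mulmxA (pid_mx _)) pid_mx_id; last by rewrite hr.
    by rewrite hs inv_unitary ?perm_unitary // mulmxA.
  by rewrite !adjmx_mul adjmxK adjmx_pid mulmxA.
transitivity (adjmx V *m (V *m pinvmx V)); first by rewrite mulmxA hVV mul1mx.
by rewrite -h2 adjmx_mul mulmxA -adjmx_mul h1 adjmx1 mul1mx.
Qed.


Lemma castmx_mulmx m m' n n' p p' (e1 : m = m') (e2 : n = n') (e3 : p = p')
  (A : 'M[C]_(m, n)) (B : 'M[C]_(n, p)) :
  castmx (e1, e2) A *m castmx (e2, e3) B = castmx (e1, e3) (A *m B).
Proof. by case: m' / e1; case: n' / e2; case: p' / e3; rewrite !castmx_id. Qed.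

Lemma castmx1 m m' (e : m = m') : castmx (e, e) (1%:M : 'M[C]_m) = 1%:M.
Proof. by case: m' / e; rewrite castmx_id. Qed.

Lemma unitary_cast m m' (e : m = m') (U : 'M[C]_m) : U *m adjmx U = 1%:M ->
  castmx (e, e) U *m adjmx (castmx (e, e) U) = 1%:M.
Proof. by move=> hU; rewrite adjmx_cast /= castmx_mulmx hU castmx1. Qed.

Lemma adjmx_tens m n p q (A : 'M[C]_(m, n)) (B : 'M[C]_(p, q)) :
  adjmx (A *t B) = adjmx A *t adjmx B.
Proof. by rewrite !adj_t trmx_tens map_mxT. Qed.

Lemma tens11 m n : (1%:M : 'M[C]_m) *t (1%:M : 'M[C]_n) = 1%:M.
Proof.
apply/matrixP => i j.
case: (mxtens_indexP i) => a b; case: (mxtens_indexP j) => c d.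
rewrite tensmxE !mxE (inj_eq (can_inj (@mxtens_indexK _ _))) xpair_eqE.
by case: (a == c); case: (b == d); rewrite ?mulr1 ?mulr0 ?mul0r.
Qed.

Lemma unitary_tens m n (A : 'M[C]_m) (B : 'M[C]_n) :
  A *m adjmx A = 1%:M -> B *m adjmx B = 1%:M -> (A *t B) *m adjmx (A *t B) = 1%:M.
Proof. by move=> hA hB; rewrite adjmx_tens tensmx_mul hA hB tens11. Qed.

Lemma unitary_mul n (A B : 'M[C]_n) :
  A *m adjmx A = 1%:M -> B *m adjmx B = 1%:M -> (A *m B) *m adjmx (A *m B) = 1%:M.
Proof. by move=> hA hB; rewrite adjmx_mul mulmxA -(mulmxA A) hB mulmx1 hA. Qed.

Lemma unitary1 n : (1%:M : 'M[C]_n) *m adjmx 1%:M = 1%:M.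
Proof. by rewrite adjmx1 mulmx1. Qed.

Lemma pauliX_unitary : pauliX C *m adjmx (pauliX C) = 1%:M.
Proof.
apply/matrixP => i j; rewrite !mxE !big_ord_recl big_ord0 !adjmxE /pauliX !mxE.
by case: i => [[|[|//]] hi]; case: j => [[|[|//]] hj] /=;
  rewrite ?rmorph0 ?rmorph1 ?mulr0 ?mul0r ?mulr1 ?addr0 ?add0r.
Qed.

Lemma pauliZ_unitary : pauliZ C *m adjmx (pauliZ C) = 1%:M.
Proof.
apply/matrixP => i j; rewrite !mxE !big_ord_recl big_ord0 !adjmxE /pauliZ !mxE.
by case: i => [[|[|//]] hi]; case: j => [[|[|//]] hj] /=;
  rewrite ?rmorph0 ?rmorph1 ?rmorphN ?mulr0 ?mul0r ?mulr1 ?addr0 ?add0r ?mulrNN ?mulr1 //; by rewrite mul1r rmorph1.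
Qed.

Lemma pauli1_unitary ab : pauli1 C ab *m adjmx (pauli1 C ab) = 1%:M.
Proof.
rewrite /pauli1; apply: unitary_mul.
  by case: ab.1; [apply: pauliX_unitary | apply: unitary1].
by case: ab.2; [apply: pauliZ_unitary | apply: unitary1].
Qed.

Lemma pauli_seq_unitary s : pauli_seq C s *m adjmx (pauli_seq C s) = 1%:M.
Proof.
elim: s => [|p s IH] /=; first exact: unitary1.
by apply: unitary_cast; apply: unitary_tens => //; apply: pauli1_unitary.
Qed.

Lemma pauliU_unitary d (k : d.-tuple (bool * bool)) :
  pauliU C k *m adjmx (pauliU C k) = 1%:M.
Proof. by apply: unitary_cast; apply: pauli_seq_unitary. Qed.


Lemma ket0_iso k : adjmx (ket0 C k) *m ket0 C k = 1%:M.
Proof.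
have h0 : (0 < 2 ^ k)%N by rewrite expn_gt0.
apply/matrixP => a b; rewrite [a]ord1 [b]ord1 !mxE.
rewrite (bigD1 (Ordinal h0)) //= big1 ?addr0.
  by rewrite adjmxE !mxE /= rmorph1 mulr1.
move=> i hi; rewrite adjmxE !mxE.
have -> : (val i == 0%N) = false.
  by apply/negbTE; apply: contra hi => /eqP e; apply/eqP/val_inj.
by rewrite mulr0.
Qed.

Lemma Vmx_iso d1 d2 (h : (d2 <= d1)%N) : adjmx (Vmx C h) *m Vmx C h = 1%:M.
Proof.
rewrite /Vmx adjmx_cast /= castmx_mulmx adjmx_tens tensmx_mul adjmx1 mul1mx.
by rewrite ket0_iso tens11 castmx1.
Qed.

Lemma ppm_T m k : ppm ((1%:M : 'M[C]_m) *t ket0 C k).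
Proof.
move=> i j i' j'; case: (mxtens_indexP i) => a b; case: (mxtens_indexP j) => c z.
case: (mxtens_indexP i') => a' b'; case: (mxtens_indexP j') => c' z'.
rewrite !tensmxE !mxE => h1 h2.
rewrite !(inj_eq (can_inj (@mxtens_indexK _ _))) !xpair_eqE [z]ord1 [z']ord1 eqxx andbT.
move: h1 h2; case: (a =P c) => [<-|]; last by rewrite mulr0n mul0r eqxx.
case: (a' =P c') => [<-|]; last by rewrite mulr0n mul0r eqxx.
case: (val b =P 0%N) => [hb|]; last by rewrite mulr0 eqxx.
case: (val b' =P 0%N) => [hb'|]; last by rewrite mulr0 eqxx.
have -> : b = b' by apply: val_inj; rewrite hb hb'.
by rewrite eqxx andbT.
Qed.

Lemma ppm_cast m n m' n' (e : (m = m') * (n = n')) (A : 'M[C]_(m, n)) :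
  ppm A -> ppm (castmx e A).
Proof.
move=> hA i j i' j'; rewrite !castmxE => h1 h2.
have := hA _ _ _ _ h1 h2.
by rewrite !(inj_eq (@cast_ord_inj _ _ _)).
Qed.

Lemma Vmx_ppm d1 d2 (h : (d2 <= d1)%N) : ppm (Vmx C h).
Proof. by apply: ppm_cast; apply: ppm_T. Qed.

Lemma pinvmx_Vmx d1 d2 (h : (d2 <= d1)%N) : pinvmx (Vmx C h) = adjmx (Vmx C h).
Proof. by apply: pinvmx_iso; [apply: Vmx_ppm | apply: Vmx_iso]. Qed.

Lemma pinvmx_unit n (U : 'M[C]_n) : U *m adjmx U = 1%:M -> pinvmx U = adjmx U.
Proof.
move=> hU; have [Uu _] := mulmx1_unit hU.
by rewrite pinvmxE // inv_unitary.
Qed.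

End Aux.

Section Core.
Variable C : numClosedFieldType.

Lemma psdD n (P Q : 'M[C]_n) : psd P -> psd Q -> psd (P + Q).
Proof.
by move=> hP hQ v; rewrite -/(qf2 _ _ _) qf2D; exact: addr_ge0 (hP v) (hQ v).
Qed.

Lemma psdZ n a (P : 'M[C]_n) : 0 <= a -> psd P -> psd (a *: P).
Proof. by move=> ha hP v; rewrite -/(qf2 _ _ _) qf2Z; apply: mulr_ge0 => //; apply: hP. Qed.

Lemma adj_congr m n (T : 'M[C]_(m, n)) X : adjmx X = X ->
  adjmx (adjmx T *m X *m T) = adjmx T *m X *m T.
Proof. by move=> hX; rewrite !adjmx_mul adjmxK hX mulmxA. Qed.

Lemma posdef_unit n (P : 'M[C]_n) : posdef P -> P \in unitmx.
Proof.
move=> hP; rewrite unitmxE unitfE; apply/negP => /det0P [v vn0 hv].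
have an0 : adjmx v != 0.
  by apply: contra vn0 => /eqP h; rewrite -[v]adjmxK h adjmx0.
have := hP _ an0; rewrite adjmxK hv mul0mx mxE.
by rewrite lt_irreflexive.
Qed.

Lemma herm_inv n (P : 'M[C]_n) : adjmx P = P -> P \in unitmx ->
  adjmx (invmx P) = invmx P.
Proof.
move=> hP hu.
have h1 : adjmx (invmx P) *m P = 1%:M by rewrite -{2}hP -adjmx_mul mulmxV // adjmx1.
by rewrite -[adjmx _]mulmx1 -(mulmxV hu) mulmxA h1 mul1mx.
Qed.

Lemma psd_inv n (P : 'M[C]_n) : psd P -> P \in unitmx -> psd (invmx P).
Proof.
move=> hP hu; have hH := psd_herm hP.
have -> : invmx P = adjmx (invmx P) *m P *m invmx P.
  by rewrite herm_inv // mulVmx // mul1mx.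
exact: psd_congr.
Qed.


Lemma KB n (A B Ai : 'M[C]_n) : psd A -> psd B -> psd Ai ->
  Ai *m A = 1%:M ->
  (forall v, qf2 (B *m Ai *m B) v v <= qf2 A v v) -> psd (B - B *m Ai *m B).
Proof.
move=> hA hB hAi hAiA hKA.
have hAh := psd_herm hA; have hBh := psd_herm hB; have hAih := psd_herm hAi.
have hK : psd (B *m Ai *m B) by rewrite -{1}hBh; apply: psd_congr.
have hBA : forall v, qf2 B v v <= qf2 A v v.
  move=> v.
  have e1 : qf2 Ai (B *m v) (A *m v) = qf2 B v v.
    by rewrite /qf2 adjmx_mul hBh !mulmxA -(mulmxA _ Ai A) hAiA mulmx1.
  have e2 : qf2 Ai (B *m v) (B *m v) = qf2 (B *m Ai *m B) v v.
    by rewrite -qf2_congr hBh.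
  have e3 : qf2 Ai (A *m v) (A *m v) = qf2 A v v.
    by rewrite -qf2_congr hAh -mulmxA hAiA mulmx1.
  have hcs := CS (B *m v) (A *m v) hAi.
  rewrite e1 e2 e3 (psd_real _ hB) in hcs.
  have hqA : 0 <= qf2 A v v := hA v.
  have hqB : 0 <= qf2 B v v := hB v.
  have h2 : qf2 B v v * qf2 B v v <= qf2 A v v * qf2 A v v.
    by apply: le_trans hcs _; apply: ler_wpM2r.
  by rewrite -ler_sqr ?qualifE //= !expr2.
move=> v; rewrite -/(qf2 _ _ _) qf2B subr_ge0.
set w := Ai *m B *m v.
have e1 : qf2 B v w = qf2 (B *m Ai *m B) v v by rewrite /qf2 /w !mulmxA.
have e2 : qf2 A w w = qf2 (B *m Ai *m B) v v.
  by rewrite /w -qf2_congr adjmx_mul hAih hBh -(mulmxA B Ai A) hAiA mulmx1 mulmxA.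
have hcs := CS v w hB.
rewrite e1 (psd_real _ hK) in hcs.
have hqK : 0 <= qf2 (B *m Ai *m B) v v := hK v.
have hqB : 0 <= qf2 B v v := hB v.
have h2 : qf2 (B *m Ai *m B) v v * qf2 (B *m Ai *m B) v v <=
    qf2 B v v * qf2 (B *m Ai *m B) v v.
  apply: le_trans hcs _; apply: ler_wpM2l => //.
  by rewrite -e2; apply: hBA.
have [k0|kn0] := eqVneq (qf2 (B *m Ai *m B) v v) 0; first by rewrite k0.
have kp : 0 < qf2 (B *m Ai *m B) v v by rewrite lt_def kn0 hqK.
by rewrite -(ler_pM2r kp).
Qed.


Lemma hC1 n (X : 'M[C]_n) :
  adjmx (row_mx 1%:M 1%:M : 'M[C]_(n, n + n)) *m X *m row_mx 1%:M 1%:M =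
  block_mx X X X X.
Proof.
by rewrite adjmx_row adjmx1 mul_col_mx !mul1mx mul_col_row !mulmx1.
Qed.

Lemma hC2 n (X : 'M[C]_n) :
  adjmx (row_mx 1%:M (- 1%:M) : 'M[C]_(n, n + n)) *m X *m row_mx 1%:M (- 1%:M) =
  block_mx X (- X) (- X) X.
Proof.
rewrite adjmx_row adjmxN adjmx1 mul_col_mx !mulNmx !mul1mx mul_col_row.
by rewrite !mulmxN !mulNmx !mulmx1 opprK.
Qed.

Lemma block_eq n (a b c d a' b' c' d' : 'M[C]_n) :
  a = a' -> b = b' -> c = c' -> d = d' -> block_mx a b c d = block_mx a' b' c' d'.
Proof. by move=> -> -> -> ->. Qed.

Lemma two_neq0 : (2 : C) != 0. Proof. by rewrite pnatr_eq0. Qed.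


Lemma core n (A B Ai : 'M[C]_n) (P : 'M[C]_(n + n)) (e : C) :
  psd A -> psd B -> psd (B - B *m Ai *m B) -> A *m Ai = 1%:M ->
  P *m adjmx P = 1%:M -> \tr A = 2^-1 -> \tr B = e -> e \is Num.real ->
  1 - e <= fidelity (P *m block_mx A 0 0 A *m adjmx P)
                    (P *m block_mx A B B A *m adjmx P).
Proof.
move=> hA hB hBK hAAi hP trA trB er.
have hP' := unitary_adj hP.
have hAh := psd_herm hA; have hBh := psd_herm hB.
set K := B *m Ai *m B in hBK.
pose T1 : 'M[C]_(n, n + n) := row_mx 1%:M 1%:M.
pose T2 : 'M[C]_(n, n + n) := row_mx 1%:M (- 1%:M).
pose C1 X := adjmx T1 *m X *m T1.
pose C2 X := adjmx T2 *m X *m T2.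
have hc1 : forall X, C1 X = block_mx X X X X by move=> X; exact: hC1.
have hc2 : forall X, C2 X = block_mx X (- X) (- X) X by move=> X; exact: hC2.
pose Minv0 : 'M[C]_(n + n) := block_mx Ai 0 0 Ai.
have h2 := two_neq0.
have hMa0 : block_mx A 0 0 A = 2^-1 *: (C1 A + C2 A).
  rewrite hc1 hc2 add_block_mx scale_block_mx.
  by apply: block_eq; apply/matrixP => i j; rewrite !mxE; field.
have hMa10 : block_mx A B B A - block_mx A 0 0 A = 2^-1 *: (C1 B - C2 B).
  rewrite hc1 hc2 !opp_block_mx !add_block_mx scale_block_mx.
  by apply: block_eq; apply/matrixP => i j; rewrite !mxE; field.
have hT2 : T2 *m Minv0 *m adjmx T2 = Ai + Ai.
  rewrite /T2 /Minv0 mul_row_block adjmx_row adjmxN adjmx1 mul_row_col.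
  by rewrite !mulmx0 addr0 add0r !mul1mx mulmx1 !mulNmx mul1mx mulmxN mulmx1 opprK.
set G0 := 2^-1 *: C2 B.
have hG0 : G0 *m Minv0 *m G0 = 2^-1 *: C2 K.
  rewrite /G0 /C2 -scalemxAl -scalemxAr -scalemxAl scalerA.
  rewrite !mulmxA -(mulmxA _ T2 Minv0) -(mulmxA _ (T2 *m Minv0)) hT2.
  have -> : Ai + Ai = 2 *: Ai by rewrite scaler_nat mulr2n.
  rewrite -scalemxAr -!scalemxAl scalerA /C2 /K ?mulmxA.
  by congr (_ *: _); field.
have hAiA : Ai *m A = 1%:M := mulmx1C hAAi.
have hMM : block_mx A 0 0 A *m Minv0 = 1%:M.
  rewrite /Minv0 mulmx_block !mulmx0 !mul0mx !addr0 !add0r hAAi.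
  by rewrite -scalar_mx_block.
have h20 : 0 <= (2 : C)^-1 by rewrite invr_ge0 ler0n.
set Ma0 := block_mx A 0 0 A in hMa0 hMa10 hMM *.
set Ma1 := block_mx A B B A in hMa10 *.
have hpsdMa0 : psd Ma0.
  by rewrite hMa0; apply: psdZ => //; apply: psdD; apply: psd_congr.
set Mf0 := P *m Ma0 *m adjmx P.
set Mf1 := P *m Ma1 *m adjmx P.
have hpsdMf0 : psd Mf0 by rewrite /Mf0 -{1}(adjmxK P); apply: psd_congr.
have [hR hRR] := sqrtm_spec hpsdMf0.
set R := sqrtm Mf0 in hR hRR *.
have hRh := psd_herm hR.
set Mf0inv := P *m Minv0 *m adjmx P.
have hMf : Mf0 *m Mf0inv = 1%:M.
  by rewrite /Mf0 /Mf0inv !mulmxA -(mulmxA _ (adjmx P) P) hP' mulmx1 -(mulmxA P) hMM mulmx1 hP.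
set Rinv := R *m Mf0inv.
have hRRi : R *m Rinv = 1%:M by rewrite /Rinv mulmxA hRR hMf.
have hRiR : Rinv *m R = 1%:M := mulmx1C hRRi.
have hRih : adjmx Rinv = Rinv.
  have h : adjmx Rinv *m adjmx R = 1%:M by rewrite -adjmx_mul hRRi adjmx1.
  rewrite hRh in h.
  by rewrite -[adjmx Rinv]mulmx1 -hRRi mulmxA h mul1mx.
have hRiRi : Rinv *m Rinv = Mf0inv by rewrite {2}/Rinv mulmxA hRiR mul1mx.
have hG0h : adjmx G0 = G0.
  rewrite /G0 adjmxZ cV rmorph_nat; congr (_ *: _).
  by rewrite /C2 adj_congr.
set G := P *m G0 *m adjmx P.
have hGh : adjmx G = G by rewrite /G !adjmx_mul adjmxK hG0h mulmxA.
set Nn := R - Rinv *m G.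
have hNN : adjmx Nn *m Nn = Mf0 - G - G + G *m Mf0inv *m G.
  rewrite /Nn adjmxB adjmx_mul hGh hRih hRh mulmxBl !mulmxBr hRR.
  rewrite mulmxA hRRi mul1mx -(mulmxA G Rinv R) hRiR mulmx1.
  rewrite (mulmxA (G *m Rinv)) -(mulmxA G Rinv Rinv) hRiRi.
  move: (Mf0) (G) (G *m Mf0inv *m G) => a b c.
  by apply/matrixP => i j; rewrite !mxE; ring.
have hGMG : G *m Mf0inv *m G = P *m (G0 *m Minv0 *m G0) *m adjmx P.
  rewrite /G /Mf0inv !mulmxA -(mulmxA _ (adjmx P) P) hP' mulmx1.
  by rewrite -(mulmxA _ (adjmx P) P) hP' mulmx1.
have hQ0 : Ma1 - (Ma0 - G0 - G0 + G0 *m Minv0 *m G0) =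
    2^-1 *: C1 B + 2^-1 *: C2 (B - K).
  have -> : Ma1 - (Ma0 - G0 - G0 + G0 *m Minv0 *m G0) =
      (Ma1 - Ma0) + G0 + G0 - G0 *m Minv0 *m G0.
    move: (Ma1) (Ma0) (G0) (G0 *m Minv0 *m G0) => a b c d.
    by apply/matrixP => i j; rewrite !mxE; ring.
  rewrite hMa10 hG0 /G0.
  have -> : C2 (B - K) = C2 B - C2 K by rewrite /C2 mulmxBr mulmxBl.
  move: (C1 B) (C2 B) (C2 K) => a b c.
  by apply/matrixP => i j; rewrite !mxE; field.
have hQ : Mf1 - adjmx Nn *m Nn =
    P *m (2^-1 *: C1 B + 2^-1 *: C2 (B - K)) *m adjmx P.
  rewrite hNN hGMG -hQ0 /Mf1 /Mf0 /G.
  rewrite mulmxBr mulmxBl; congr (_ - _); rewrite mulmxDr mulmxDl; congr (_ + _).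
  by rewrite !mulmxBr !mulmxBl.
have hpsdMN : psd (Mf1 - adjmx Nn *m Nn).
  rewrite hQ -{1}(adjmxK P); apply: psd_congr.
  by apply: psdD; apply: psdZ => //; apply: psd_congr.
set MM := Nn *m R.
set XX := R *m Mf1 *m R.
have hXM : XX - adjmx MM *m MM = adjmx R *m (Mf1 - adjmx Nn *m Nn) *m R.
  rewrite /XX /MM; move: (Mf1) (Nn) => Y N.
  by rewrite adjmx_mul hRh mulmxBr mulmxBl !mulmxA.
have hpsdXM : psd (XX - adjmx MM *m MM) by rewrite hXM; apply: psd_congr.
have hpsdM : psd (adjmx MM *m MM).
  by rewrite -[adjmx MM]mulmx1; apply: psd_congr; apply: psd1.
have hpsdX : psd XX.
  have -> : XX = (XX - adjmx MM *m MM) + adjmx MM *m MM by rewrite subrK.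
  exact: psdD.
have [hS hSS] := sqrtm_spec hpsdX.
have trM : \tr MM = 1 - e.
  have t1 : \tr (R *m R) = 1.
    rewrite hRR /Mf0 mxtrace_conj // /Ma0 mxtrace_block trA.
    by field.
  have t2 : \tr (Rinv *m G *m R) = e.
    rewrite mxtrace_mulC mulmxA hRRi mul1mx /G mxtrace_conj // /G0 mxtraceZ hc2.
    by rewrite mxtrace_block trB; field.
  rewrite /MM /Nn mulmxBl raddfB /= t1.
  by rewrite t2.
have -> : fidelity Mf0 Mf1 = \tr (sqrtm XX) by [].
rewrite -trM; apply: trace_bound => //; first by rewrite hSS.
by rewrite trM rpredB // rpred1.
Qed.

End Core.

Theorem theorem15 (C : numClosedFieldType) (d1 d2 : nat)
  (hd2 : (1 <= d2)%N) (hd : (d2 <= d1)%N)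
  (Mo : 'M[C]_(2 ^ d1)) (Mc : 'M[C]_(2 ^ d2))
  (hMo : density Mo) (hMo_pd : posdef Mo) (hMc : density Mc)
  (k : d1.-tuple (bool * bool)) (k' : d2.-tuple (bool * bool))
  (eta : nat) (heta : (0 < eta)%N)
  (s : 'S_(2 ^ d1 + 2 ^ d1)) (eps : C) (heps : 0 < eps) :
  let Mo' := conjmx (pauliU C k) Mo in
  let Mc' := conjmx (pauliU C k') Mc in
  let Mc'' := conjmx (Vmx C hd) Mc' in
  let Mf0 := conjmx (perm_mx s) (Ma0 Mo') in
  let Mf1 := conjmx (perm_mx s) (Ma1 eta Mo' Mc'') in
  eta%:R^-1 < eps ->
  (eta%:R ^+ 2)^-1 * opnorm (Mc'' *m invmx Mo' *m Mc'')
    <= 4^-1 * lambda_min Mo' ->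
  1 - eta%:R^-1 <= fidelity Mf0 Mf1.
Proof.
move=> Mo' Mc' Mc'' Mf0 Mf1 _ hcond.
have hU := pauliU_unitary C k; have hU' := pauliU_unitary C k'.
have hUa := unitary_adj hU; have hUa' := unitary_adj hU'.
have hV := Vmx_iso C hd.
have hP := perm_unitary C s.
have hn : (0 < 2 ^ d1)%N by rewrite expn_gt0.
have hMo'E : Mo' = pauliU C k *m Mo *m adjmx (pauliU C k).
  by rewrite /Mo' /conjmx pinvmx_unit.
have hMc'E : Mc' = pauliU C k' *m Mc *m adjmx (pauliU C k').
  by rewrite /Mc' /conjmx pinvmx_unit.
have hMc''E : Mc'' = Vmx C hd *m Mc' *m adjmx (Vmx C hd).
  by rewrite /Mc'' /conjmx pinvmx_Vmx.
have hpMo' : psd Mo'.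
  by rewrite hMo'E -{1}(adjmxK (pauliU C k)); apply: psd_congr; case: hMo.
have hpMc' : psd Mc'.
  by rewrite hMc'E -{1}(adjmxK (pauliU C k')); apply: psd_congr; case: hMc.
have hpMc'' : psd Mc''.
  by rewrite hMc''E -{1}(adjmxK (Vmx C hd)); apply: psd_congr.
have trMo' : \tr Mo' = 1 by rewrite hMo'E mxtrace_conj //; case: hMo.
have trMc'' : \tr Mc'' = 1.
  rewrite hMc''E mxtrace_mulC mulmxA hV mul1mx hMc'E mxtrace_conj //.
  by case: hMc.
have huMo' : Mo' \in unitmx.
  have [Uu Uau] := mulmx1_unit hU.
  by rewrite hMo'E !unitmx_mul Uu Uau posdef_unit.
have hMc''h := psd_herm hpMc''.
have etan0 : (eta%:R : C) != 0 by rewrite pnatr_eq0 -lt0n.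
have h2 : (2 : C) != 0 by rewrite pnatr_eq0.
set A := 2^-1 *: Mo'.
set B := eta%:R^-1 *: Mc''.
set Ai := 2 *: invmx Mo'.
have hAAi : A *m Ai = 1%:M.
  by rewrite /A /Ai -scalemxAl -scalemxAr scalerA mulmxV // mulVf // scale1r.
have hAiA : Ai *m A = 1%:M := mulmx1C hAAi.
have hpA : psd A by apply: psdZ => //; rewrite invr_ge0 ler0n.
have hpB : psd B by apply: psdZ => //; rewrite invr_ge0 ler0n.
have hpAi : psd Ai by apply: psdZ; [rewrite ler0n | apply: psd_inv].
set Pm := Mc'' *m invmx Mo' *m Mc'' in hcond.
have hpPm : psd Pm by rewrite /Pm -{1}hMc''h; apply: psd_congr; apply: psd_inv.
have hKE : B *m Ai *m B = (eta%:R^-1 * 2 * eta%:R^-1) *: Pm.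
  rewrite /B /Ai /Pm -!scalemxAl -!scalemxAr -scalemxAl !scalerA; congr (_ *: _); ring.
have hKA : forall v, qf2 (B *m Ai *m B) v v <= qf2 A v v.
  move=> v; rewrite hKE qf2Z /A qf2Z.
  have ht : 0 <= qf2 1%:M v v := psd1 v.
  have hc : 0 <= eta%:R^-1 * 2 * eta%:R^-1 :> C.
    by rewrite !mulr_ge0 // ?invr_ge0 ?ler0n.
  apply: le_trans (ler_wpM2l hc (opnorm_bound v hpPm hn)) _.
  have -> : eta%:R^-1 * 2 * eta%:R^-1 * (opnorm Pm * qf2 1%:M v v) =
      2 * ((eta%:R ^+ 2)^-1 * opnorm Pm) * qf2 1%:M v v.
    by field.
  apply: le_trans (_ : 2 * (4^-1 * lambda_min Mo') * qf2 1%:M v v <= _).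
    by apply: ler_wpM2r => //; apply: ler_wpM2l => //; rewrite ler0n.
  have -> : 2 * (4^-1 * lambda_min Mo') * qf2 1%:M v v =
      2^-1 * (lambda_min Mo' * qf2 1%:M v v).
    have h4 : (4 : C) = 2 * 2 by rewrite -natrM.
    by rewrite h4; field.
  apply: ler_wpM2l; first by rewrite invr_ge0 ler0n.
  exact: rayleigh_min.
have hBK := KB hpA hpB hpAi hAiA hKA.
have -> : Mf0 = perm_mx s *m block_mx A 0 0 A *m adjmx (perm_mx s).
  by rewrite /Mf0 /conjmx pinvmx_unit.
have -> : Mf1 = perm_mx s *m block_mx A B B A *m adjmx (perm_mx s).
  by rewrite /Mf1 /conjmx pinvmx_unit // /Ma1 hMc''h.
apply: core => //.
- by rewrite /A mxtraceZ trMo' mulr1.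
- by rewrite /B mxtraceZ trMc'' mulr1.
- by rewrite rpredV realn.
Qed.
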